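(* Let $p>1$ be an integer and let $u^{(p)}$ be the fixed point of the substitution $\varphi_p(L)=L^pS$, $\varphi_p(S)=M$, $\varphi_p(M)=L^{p-1}S$. If $MzM$ is a factor of $u^{(p)}$ with $|z|_M=0$, then $z=(L^pS)^p$, or $z=L^{p-1}S(L^pS)^p$, or $z=L^{p-1}S(L^pS)^{p-1}$. Consequently $p^2+p-1\le |z|\le p^2+2p$.
   Context: $u^{(p)}=\lim_{n\to\infty}\varphi_p^n(L)$. A factor is a finite contiguous subword; $|w|$ is the length and $|w|_a$ the number of occurrences of the letter $a$ in $w$; $w^k$ denotes $k$ concatenated copies of $w$. *)

(* Defs.v *)
From HB Require Import structures.
From mathcomp Require Import all_boot.
Set Implicit Arguments. Unset Strict Implicit. Unset Printing Implicit Defensive.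

Inductive letter := L | S | M.

Definition letter_eqb (a b : letter) : bool :=
  match a, b with L, L | S, S | M, M => true | _, _ => false end.
Lemma letter_eqP : Equality.axiom letter_eqb.
Proof. by case; case; constructor. Qed.
HB.instance Definition _ := hasDecEq.Build letter letter_eqP.

Definition wpow (w : seq letter) (k : nat) : seq letter := flatten (nseq k w).

Definition phi (p : nat) (a : letter) : seq letter :=
  match a with
  | L => rcons (nseq p L) S
  | S => [:: M]
  | M => rcons (nseq p.-1 L) S
  end.

Definition phiw (p : nat) (w : seq letter) : seq letter := flatten (map (phi p) w).

Definition phin (p n : nat) : seq letter := iter n (phiw p) [:: L].

(* w is a factor of u^(p) = lim_n phi_p^n(L): since phi_p(L) begins with L,
   the words phi_p^n(L) are successive prefixes of u^(p), so the factors of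
   u^(p) are exactly the factors (infixes) of the words phi_p^n(L). *)
Definition factor_u (p : nat) (w : seq letter) : Prop :=
  exists n, infix w (phin p n).

(* Main.v *)
Require Import Defs.
From mathcomp Require Import all_boot.
From mathcomp Require Import zify.

Definition allowed (a b : letter) : bool :=
  match a, b with S, S | L, M | M, M => false | _, _ => true end.

Lemma phiw_cons p a w : phiw p (a :: w) = phi p a ++ phiw p w.
Proof. by []. Qed.

Lemma phiw_cat p u v : phiw p (u ++ v) = phiw p u ++ phiw p v.
Proof. by rewrite /phiw map_cat flatten_cat. Qed.

Lemma phiw_nseqL p k : phiw p (nseq k L) = wpow (rcons (nseq p L) S) k.
Proof. by elim: k => //= k IH; rewrite phiw_cons IH. Qed.

Lemma wpowS w k : wpow w k.+1 = w ++ wpow w k.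
Proof. by []. Qed.

Lemma count_wpowL p k : count_mem M (wpow (rcons (nseq p L) S) k) = 0.
Proof.
elim: k => // k IH; rewrite wpowS count_cat IH -cats1 count_cat count_nseq /=.
by rewrite mul0n.
Qed.

Lemma count_BS p : count_mem M (rcons (nseq p.-1 L) S) = 0.
Proof. by rewrite -cats1 count_cat count_nseq /= mul0n. Qed.

Lemma size_wpow w k : size (wpow w k) = k * size w.
Proof. by elim: k => // k IH; rewrite wpowS size_cat IH mulSn. Qed.

Definition psi p w := phiw p (phiw p w).

Lemma psi_cons p a w : psi p (a :: w) = phiw p (phi p a) ++ psi p w.
Proof. by rewrite /psi phiw_cons phiw_cat. Qed.

Lemma psiL p : phiw p (phi p L) = wpow (rcons (nseq p L) S) p ++ [:: M].
Proof. by rewrite /phi -[in LHS]cats1 phiw_cat phiw_nseqL. Qed.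

Lemma psiM p : phiw p (phi p M) = wpow (rcons (nseq p L) S) p.-1 ++ [:: M].
Proof. by rewrite /phi -cats1 phiw_cat phiw_nseqL. Qed.

Lemma psiS p : phiw p (phi p S) = rcons (nseq p.-1 L) S.
Proof. by rewrite /phiw /= cats0. Qed.

Lemma prefix_free (B x t r : seq letter) :
  count_mem M B = 0 -> x ++ M :: t = B ++ r ->
  exists x', x = B ++ x' /\ x' ++ M :: t = r.
Proof.
elim: B x => [|b B IH] x /=; first by exists x.
case: x => [|c x] /= HB.
  by case=> Eb _; move: HB; rewrite -Eb eqxx.
case=> <- E; move: HB; case: (b == M) => //= H.
by have [x' [-> <-]] := IH x H E; exists x'.
Qed.

Arguments prefix_free {B x t r}.

Lemma dicho (B x t r : seq letter) :
  count_mem M B = 0 -> x ++ M :: t = (B ++ [:: M]) ++ r ->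
  (x = B /\ t = r) \/ exists x', x = B ++ M :: x' /\ x' ++ M :: t = r.
Proof.
move=> HB; rewrite -catA /= => E.
have [x' [-> E']] := prefix_free HB E.
case: x' E' => [|c x'] /=; first by case=> ->; left; rewrite cats0.
by case=> -> <-; right; exists x'.
Qed.

Arguments dicho {B x t r}.

Definition Zset p (z : seq letter) :=
  z = wpow (rcons (nseq p L) S) p
  \/ z = rcons (nseq p.-1 L) S ++ wpow (rcons (nseq p L) S) p
  \/ z = rcons (nseq p.-1 L) S ++ wpow (rcons (nseq p L) S) p.-1.

Lemma dichoL p z t r : count_mem M z = 0 ->
  z ++ M :: t = phiw p (phi p L) ++ r -> z = wpow (rcons (nseq p L) S) p.
Proof.
move=> Hz; rewrite psiL => /(dicho (count_wpowL p p)) [[-> _]//|[x' [Ex _]]].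
by move: Hz; rewrite Ex count_cat /= add1n addnS.
Qed.

Lemma dichoM p z t r : count_mem M z = 0 ->
  z ++ M :: t = phiw p (phi p M) ++ r -> z = wpow (rcons (nseq p L) S) p.-1.
Proof.
move=> Hz; rewrite psiM => /(dicho (count_wpowL p p.-1)) [[-> _]//|[x' [Ex _]]].
by move: Hz; rewrite Ex count_cat /= add1n addnS.
Qed.

Arguments dichoL {p z t r}.
Arguments dichoM {p z t r}.

Lemma sub_lemma p a w z y : a != S -> path allowed a w ->
  psi p w = z ++ M :: y -> count_mem M z = 0 -> Zset p z.
Proof.
move=> aS; case: w => [|b w] /=; first by case: z.
case/andP=> ab pw.
rewrite psi_cons => /esym E Hz.
have HS : b = S -> Zset p z.
  move=> Eb; subst b; move: E; rewrite psiS => /(prefix_free (count_BS p)) [z' [Ez E]].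
  move: Hz; rewrite Ez count_cat count_BS /= => Hz'.
  case: w E pw => [|c w] /=; first by rewrite /psi /phiw /= => E; case: z' {Ez Hz'} E.
  move=> E /andP[]; case: c E => //= E _ _; rewrite psi_cons in E; rewrite add0n in Hz'.
  - by right; left; rewrite (dichoL Hz' E).
  - by right; right; rewrite (dichoM Hz' E).
case: b E HS ab pw => E HS ab pw; last 1 first.
- by case: a aS ab.
- by left; apply: (dichoL Hz E).
- by apply: HS.
Qed.

Lemma main_psi {p w x z y} : sorted allowed w ->
  psi p w = x ++ M :: z ++ M :: y -> count_mem M z = 0 -> Zset p z.
Proof.
elim: w x => [|a w IH] x /=; first by rewrite /psi /phiw; case: x.
move=> pw; rewrite psi_cons => /esym E Hz.
have sw : sorted allowed w := path_sorted pw.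
case: a pw E => pw E.
- move: E; rewrite psiL => /(dicho (count_wpowL p p)) [[_ E]|[x' [_ E]]].
    exact: (@sub_lemma p L w z y isT pw (esym E) Hz).
  exact: (IH x').
- move: E; rewrite psiS => /(prefix_free (count_BS p)) [x' [_ E]].
  exact: (IH x').
- move: E; rewrite psiM => /(dicho (count_wpowL p p.-1)) [[_ E]|[x' [_ E]]].
    exact: (@sub_lemma p M w z y isT pw (esym E) Hz).
  exact: (IH x').
Qed.

Lemma pathL n : path allowed L (rcons (nseq n L) S).
Proof. by elim: n. Qed.

Lemma phi_dec k a : exists h s, phi k.+2 a = h :: s /\ path allowed h s /\
  (forall b, allowed a b -> exists hb sb, phi k.+2 b = hb :: sb /\ allowed (last h s) hb).
Proof.
have hL : forall b, allowed L b -> exists hb sb, phi k.+2 b = hb :: sb /\ allowed S hb.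
  by case=> // _; do 2 eexists; split; first reflexivity.
case: a.
- exists L, (rcons (nseq k.+1 L) S); split=> //; split; first exact: pathL.
  by rewrite last_rcons.
- exists M, [::]; split=> //; split=> //.
  by case=> // _; do 2 eexists; split; first reflexivity.
- exists L, (rcons (nseq k L) S); split=> //; split; first exact: pathL.
  rewrite last_rcons => b ab; apply: hL; by case: b ab.
Qed.

Lemma sorted_phi_cat k a w : path allowed a w ->
  sorted allowed (phi k.+2 a ++ phiw k.+2 w).
Proof.
elim: w a => [|b w IH] a /=.
  by move=> _; have [h [s [-> [ps _]]]] := phi_dec k a; rewrite cats0.
case/andP=> ab pw.
have [h [s [-> [ps Hb]]]] := phi_dec k a.
have [hb [sb [Eb ahb]]] := Hb b ab.
have := IH b pw; rewrite Eb /= => Hr.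
by rewrite cat_path ps /= phiw_cons Eb /= ahb Hr.
Qed.

Lemma sorted_phiw k w : sorted allowed w -> sorted allowed (phiw k.+2 w).
Proof. case: w => [|a w] //= pw; exact: sorted_phi_cat. Qed.

Lemma sorted_phin k n : sorted allowed (phin k.+2 n).
Proof. elim: n => // n IH; exact: sorted_phiw. Qed.

Theorem mainTheorem5 (p : nat) (z : seq letter) :
  1 < p ->
  factor_u p ([:: M] ++ z ++ [:: M]) ->
  count_mem M z = 0 ->
  (z = wpow (rcons (nseq p L) S) p
   \/ z = rcons (nseq p.-1 L) S ++ wpow (rcons (nseq p L) S) p
   \/ z = rcons (nseq p.-1 L) S ++ wpow (rcons (nseq p L) S) p.-1)
  /\ (p ^ 2 + p - 1 <= size z <= p ^ 2 + 2 * p).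
Proof.
case: p => [|[|k]] // _ [n /infixP [x [y E]]] Hz.
have HZ : Zset k.+2 z.
  case: n E => [E|[E|n E]].
  - by move: E; case: x => [|? [|? ?]] //=; case: y.
  - have : count_mem M (phin k.+2 1) = 0.
      by rewrite /phin /= /phiw /= cats0 -cats1 count_cat count_nseq mul0n.
    by rewrite E !count_cat /=; lia.
  - apply: (main_psi (x := x) (y := y) (sorted_phin k n) _ Hz).
    rewrite /psi. change (phin k.+2 n.+2 = x ++ M :: z ++ M :: y). by rewrite E /= -catA.
split=> //.
case: HZ => [->|[->|->]];
  rewrite ?size_cat size_wpow ?size_rcons !size_nseq /= -mulnn; nia.
Qed.
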